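(* Let $T\subseteq\mathbb{R}^n$ be an action set. Then $\dim T+\dim\mathbf{W}(T)=n$, where $\mathbf{W}(T)=\bigcap_{t\in T}\mathbf{W}(t)$.
   Context: Single-commodity network pricing setting: $G=(\mathcal{V},\mathcal{A})$ directed graph, arc costs $c\ge0$, nonempty tolled arc set $\mathcal{A}_1\subsetneq\mathcal{A}$, $n=|\mathcal{A}_1|$, $N$ node–arc incidence matrix, single origin $o$ and destination $d$ connected by a toll-free path, $b_o=1$, $b_d=-1$, $b_i=0$ otherwise, $\mathcal{X}=\{x\in\mathbb{R}^{\mathcal{A}}: Nx=b,\ x\ge0\}$, $x_{\mathcal{A}_1}$ the restriction of $x$ to $\mathcal{A}_1$. Let $f(t)=\min\{c^\top x+t^\top x_{\mathcal{A}_1}: x\in\mathcal{X}\}$ for $t\in\mathbb{R}^n$, $t\ge0$, and $f(t)=-\infty$ otherwise. An action set is a set $T=\{t:(t,z)\in F\text{ for some }z\}$ where $F$ is a face of $\operatorname{epi}(-f)$ whose affine hull's direction space does not contain $(0,1)$. For $t\ge0$, $\mathbf{W}(t)$ is the set of $w$ such that $(w,x)$ is optimal for some $x$ in $\min_{w,x}\{c^\top x+t^\top w: x_{\mathcal{A}_1}\le w,\ Nx=b,\ w\ge0,\ x\ge0\}$. $\dim$ denotes the dimension of the affine hull. *)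

(* Defs.v *)
From HB Require Import structures.
From mathcomp Require Import all_boot all_order all_algebra.
From mathcomp Require Import boolp reals.
Set Implicit Arguments. Unset Strict Implicit. Unset Printing Implicit Defensive.
Import Order.TTheory GRing.Theory Num.Theory.
Local Open Scope ring_scope.

Section Network.
Variable R : realType.

(** Affine dimension of a set S of vectors in R^I (I a finite index type):
    -1 if S is empty, otherwise the dimension of the direction space of its
    affine hull, i.e. the maximal rank of a matrix whose rows are
    differences p_i - q_i of points of S (coordinates listed along enum I). *)
Definition affdim (I : finType) (S : (I -> R) -> Prop) : int :=
  if `[< exists x, S x >] then
    (\max_(k < #|I|.+1 |
        `[< exists m (p q : 'I_m -> I -> R),
              (forall i, S (p i) /\ S (q i)) /\
              \rank (\matrix_(i < m, j < #|I|)
                        (p i (enum_val j) - q i (enum_val j))) = k >]) k)%:Z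
  else -1.

Variables (V arc : finType) (tail head : arc -> V).
Variables (c : arc -> R) (A1 : {set arc}) (o d : V).

(** tolled arcs, the index set of R^n, n = |A1| *)
Definition tolled := {a : arc | a \in A1}.

Definition Nx (x : arc -> R) (v : V) : R :=
  \sum_(a | tail a == v) x a - \sum_(a | head a == v) x a.
Definition bvec (v : V) : R := (v == o)%:R - (v == d)%:R.

Definition Xset (x : arc -> R) : Prop :=
  (forall v, Nx x v = bvec v) /\ (forall a, 0 <= x a).

Definition restr (x : arc -> R) : tolled -> R := fun a => x (val a).

Definition cost (x : arc -> R) : R := \sum_a c a * x a.
Definition tdot (t w : tolled -> R) : R := \sum_a t a * w a.

Definition nonneg (t : tolled -> R) : Prop := forall a, 0 <= t a.

(** f(t) = min { c^T x + t^T x_{A1} : x in X } for t >= 0: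
    [fval t v] says that this minimum exists and equals v. *)
Definition fval (t : tolled -> R) (v : R) : Prop :=
  exists2 x, Xset x & v = cost x + tdot t (restr x) /\
     forall y, Xset y -> v <= cost y + tdot t (restr y).

(** epigraph of -f (f = -oo outside t >= 0, so -f = +oo there) *)
Definition epi_negf (p : (tolled -> R) * R) : Prop :=
  nonneg p.1 /\ exists v, fval p.1 v /\ - v <= p.2.

Definition pcomb (l : R) (p q : (tolled -> R) * R) : (tolled -> R) * R :=
  (fun a => l * p.1 a + (1 - l) * q.1 a, l * p.2 + (1 - l) * q.2).

Definition convex_set (C : (tolled -> R) * R -> Prop) : Prop :=
  forall p q l, C p -> C q -> 0 <= l <= 1 -> C (pcomb l p q).

Definition is_face (C F : (tolled -> R) * R -> Prop) : Prop :=
  (forall p, F p -> C p) /\ convex_set F /\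
  forall p q l, C p -> C q -> 0 < l < 1 -> F (pcomb l p q) -> F p /\ F q.

(** (0,1) belongs to the direction space (the span of the differences
    of points) of the affine hull of F *)
Definition dir_contains_e (F : (tolled -> R) * R -> Prop) : Prop :=
  exists m (lam : 'I_m -> R) (p q : 'I_m -> (tolled -> R) * R),
    (forall i, F (p i) /\ F (q i)) /\
    (forall a, \sum_i lam i * ((p i).1 a - (q i).1 a) = 0) /\
    \sum_i lam i * ((p i).2 - (q i).2) = 1.

Definition action_set (T : (tolled -> R) -> Prop) : Prop :=
  exists F, is_face epi_negf F /\ (exists p, F p) /\ ~ dir_contains_e F /\
    forall t, T t <-> exists z, F (t, z).

Definition feasW (w : tolled -> R) (x : arc -> R) : Prop :=
  Xset x /\ nonneg w /\ forall a, x (val a) <= w a.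

Definition Wt (t : tolled -> R) (w : tolled -> R) : Prop :=
  exists x, feasW w x /\
    forall w' x', feasW w' x' -> cost x + tdot t w <= cost x' + tdot t w'.

Definition WT (T : (tolled -> R) -> Prop) (w : tolled -> R) : Prop :=
  forall t, T t -> Wt t w.

Fixpoint tollfree_walk (u v : V) (s : seq arc) : bool :=
  if s is a :: s' then [&& tail a == u, a \notin A1 & tollfree_walk (head a) v s']
  else u == v.

End Network.

(* Main.v *)
Require Import Defs.
From HB Require Import structures.
From mathcomp Require Import all_boot all_order all_algebra.
From mathcomp Require Import boolp reals.
From mathcomp Require Import ring lra.
Import Order.TTheory GRing.Theory Num.Theory.
Local Open Scope ring_scope.

Section Cone.
Variable R : realType.
Variable I : finType.
Variable lin : (I -> R) -> Prop.
Hypothesis linB : forall y z (th : R), lin y -> lin z -> lin (fun i => y i - th * z i).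
Variables G H : (I -> R) -> R.
Hypothesis GB : forall y z th, G (fun i => y i - th * z i) = G y - th * G z.
Hypothesis HB : forall y z th, H (fun i => y i - th * z i) = H y - th * H z.
Definition cone y := lin y /\ forall i, 0 <= y i.
Hypothesis Gpos : forall y, cone y -> 0 <= G y.
Hypothesis GH : forall y, cone y -> G y = 0 -> H y = 0.

Definition supp (y : I -> R) : {set I} := [set i | y i != 0].

Lemma reps (L : seq {set I}) : exists K, 0 <= K /\ exists E : {set I} -> (I -> R),
  forall S, S \in L -> (exists e, cone e /\ supp e = S) ->
    cone (E S) /\ supp (E S) = S /\ 0 <= H (E S) + K * G (E S).
Proof.
elim: L => [|S L [K [K0 [E HE]]]].
  by exists 0; split => //; exists (fun _ _ => 0) => S.
case: (pselect (exists e, cone e /\ supp e = S)) => [[e [ce se]]|ne].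
  exists (K + `|H e| / G e); split.
    by apply: addr_ge0 => //; apply: divr_ge0 => //; apply: Gpos.
  exists (fun S' => if S' == S then e else E S') => S'; rewrite inE.
  case: eqP => [-> _ _|nS /= inL ex].
    split => //; split => //.
    have := Gpos _ ce; rewrite le_eqVlt => /orP[/eqP g0|gp].
      by rewrite -g0 (GH _ ce (esym g0)) mulr0 addr0.
    rewrite mulrDl divfK ?gt_eqF //.
    have : 0 <= K * G e by apply: mulr_ge0 => //; apply: ltW.
    have : - H e <= `|H e| by rewrite -normrN ler_norm.
    lra.
  have [cE [sE hE]] := HE S' inL ex.
  split => //; split => //.
  rewrite mulrDl addrA; apply: addr_ge0 => //.
  by apply: mulr_ge0; [apply: divr_ge0 => //; apply: Gpos | apply: Gpos].
exists K; split => //; exists E => S'; rewrite inE => /orP[/eqP -> ex|].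
  by case: (ne ex).
by apply: HE.
Qed.

Lemma cone_bound : exists K, 0 <= K /\ forall y, cone y -> 0 <= H y + K * G y.
Proof.
have [K [K0 [E HE]]] := reps (enum {set I}).
exists K; split => //.
suff: forall n y, cone y -> (#|supp y| <= n)%N -> 0 <= H y + K * G y.
  by move=> h y cy; apply: (h #|supp y|).
elim => [|n IH] y cy.
  rewrite leqn0 cards_eq0 => /eqP s0.
  have y0 : y = (fun i => y i - 1 * y i).
    apply: funext => i; have : i \notin supp y by rewrite s0 inE.
    by rewrite inE negbK => /eqP ->; rewrite mulr0 subr0.
  by rewrite y0 HB GB !mul1r !subrr mulr0 addr0.
move=> cardy.
case: (set_0Vmem (supp y)) => [s0|[i0 i0S]].
  have y0 : y = (fun i => y i - 1 * y i).
    apply: funext => i; have : i \notin supp y by rewrite s0 inE.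
    by rewrite inE negbK => /eqP ->; rewrite mulr0 subr0.
  by rewrite y0 HB GB !mul1r !subrr mulr0 addr0.
have [ce [se he]] := HE (supp y) (mem_enum _ _) (ex_intro _ y (conj cy erefl)).
set e := E (supp y) in ce se he.
have epos : forall i, i \in supp y -> 0 < e i.
  move=> i; rewrite -se inE => ne0; rewrite lt_def ne0; exact: ce.2.
have ypos : forall i, i \in supp y -> 0 < y i.
  move=> i; rewrite inE => ne0; rewrite lt_def ne0; exact: cy.2.
have eout : forall i, i \notin supp y -> e i = 0.
  by move=> i; rewrite -se inE negbK => /eqP.
have yout : forall i, i \notin supp y -> y i = 0.
  by move=> i; rewrite inE negbK => /eqP.
case: (arg_minP (fun i => y i / e i) i0S) => j jS jmin.
set th := y j / e j.
have th0 : 0 <= th by apply: divr_ge0; apply: ltW; [apply: ypos|apply: epos].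
have thle : forall i, th * e i <= y i.
  move=> i; case: (boolP (i \in supp y)) => iS.
    by rewrite -ler_pdivlMr ?epos //; apply: jmin.
  by rewrite eout // yout // mulr0.
set y' := fun i => y i - th * e i.
have cy' : cone y'.
  split; first by apply: linB; [exact: cy.1 | exact: ce.1].
  by move=> i; rewrite /y' subr_ge0.
have sub' : supp y' \subset supp y :\ j.
  apply/subsetP => i; rewrite !inE /y'.
  case: (eqVneq i j) => [->|nij] /=.
    rewrite /th divfK; first by rewrite subrr eqxx.
    by rewrite gt_eqF // epos.
  apply: contraNN => /eqP yi0.
  have iS : i \notin supp y by rewrite inE yi0 eqxx.
  by rewrite yi0 eout // mulr0 subrr eqxx.
have := IH y' cy'.
have -> : (#|supp y'| <= n)%N.
  have := subset_leq_card sub'; have := cardsD1 j (supp y); have jS' : j \in supp y := jS; rewrite jS' /= add1n.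
  move=> e1 h; rewrite -ltnS; apply: leq_trans cardy; rewrite e1 ltnS; exact: h.
move=> /(_ isT); rewrite /y' HB GB => h.
have : 0 <= th * (H e + K * G e) by apply: mulr_ge0.
move: h; set a := H y; set b := G y; set p := H e; set q := G e.
move=> h1 h2.
have -> : a + K * b = (a - th * p + K * (b - th * q)) + th * (p + K * q) by ring.
by apply: addr_ge0.
Qed.
End Cone.

Set Implicit Arguments. Unset Strict Implicit. Unset Printing Implicit Defensive.

Section Aff.
Variable R : realType.
Variable I : finType.

Definition rowv (v : I -> R) : 'rV[R]_#|I| := \row_j v (enum_val j).
Definition famM m (p q : 'I_m -> I -> R) : 'M[R]_(m, #|I|) :=
  \matrix_(i < m, j < #|I|) (p i (enum_val j) - q i (enum_val j)).
Definition infam (S : (I -> R) -> Prop) m (p q : 'I_m -> I -> R) :=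
  forall i, S (p i) /\ S (q i).

Lemma bigmax_spec N (P : pred 'I_N) (i0 : 'I_N) : P i0 ->
  exists2 k : 'I_N, P k & (\max_(k < N | P k) k)%N = k /\ forall k' : 'I_N, P k' -> (k' <= k)%N.
Proof.
move=> Pi0.
have ne : (0 < #|P|)%N by apply/card_gt0P; exists i0.
have [k Pk e] := @eq_bigmax_cond _ P (fun k => nat_of_ord k) ne.
exists k => //; split; first exact: e.
move=> k' Pk'.
have := @leq_bigmax_cond _ P (fun k : 'I_N => nat_of_ord k) _ Pk'.
by rewrite e.
Qed.

Lemma affdim_spec (S : (I -> R) -> Prop) s0 : S s0 ->
  exists m (p q : 'I_m -> I -> R), infam S p q /\
    affdim S = (\rank (famM p q))%:Z /\
    forall m' (p' q' : 'I_m' -> I -> R), infam S p' q' ->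
      (\rank (famM p' q') <= \rank (famM p q))%N.
Proof.
move=> Ss0; rewrite /affdim asboolT; last by exists s0.
match goal with |- context [ bigop _ _ (fun k => BigBody _ maxn (@?Q k) _) ] =>
  have := @bigmax_spec _ Q ord0 end.
case.
  apply/asboolP; exists 0%N, (fun _ _ => 0), (fun _ _ => 0).
  by split => [[]|]; rewrite // flatmx0 mxrank0.
move=> k /asboolP [m [p [q [fam rk]]]] [-> kmax].
exists m, p, q; split => //; split; first by rewrite /famM rk.
move=> m' p' q' fam'.
have := kmax (inord (\rank (famM p' q'))).
rewrite inordK ?ltnS ?rank_leq_col // -rk; apply.
apply/asboolP; exists m', p', q'; split => //.
Qed.
Lemma rowspace (S : (I -> R) -> Prop) m (p q : 'I_m -> I -> R) :
  infam S p q -> (forall m' (p' q' : 'I_m' -> I -> R), infam S p' q' ->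
      (\rank (famM p' q') <= \rank (famM p q))%N) ->
  forall s1 s2, S s1 -> S s2 -> (rowv (fun a => s1 a - s2 a) <= famM p q)%MS.
Proof.
move=> fam pmax s1 s2 S1 S2.
case: (boolP (rowv _ <= _)%MS) => // nsub.
pose p' := fun i : 'I_(m + 1) => match split i with inl k => p k | inr _ => s1 end.
pose q' := fun i : 'I_(m + 1) => match split i with inl k => q k | inr _ => s2 end.
have fam' : infam S p' q'.
  by move=> i; rewrite /p' /q'; case: (split i) => k //; apply: fam.
have E : famM p' q' = col_mx (famM p q) (rowv (fun a => s1 a - s2 a)).
  apply/matrixP => i j; rewrite /famM /rowv !mxE /p' /q'.
  by case: (split i) => k; rewrite !mxE.
have := pmax _ _ _ fam'; rewrite E -addsmxE.
have lt : (famM p q < famM p q + rowv (fun a => s1 a - s2 a))%MS.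
  by rewrite ltmxE addsmxSl /= addsmx_sub submx_refl.
by rewrite leqNgt (rank_ltmx lt).
Qed.
Lemma sum_enumv (F : I -> R) : \sum_(j < #|I|) F (enum_val j) = \sum_a F a.
Proof. by rewrite -big_enum_val. Qed.

Lemma rowv_mul (v w : I -> R) : (rowv v *m (rowv w)^T) 0 0 = \sum_a v a * w a.
Proof.
rewrite mxE -sum_enumv; apply: eq_bigr => j _; by rewrite !mxE.
Qed.

Lemma rowvK (u : 'rV[R]_#|I|) : rowv (fun a => u 0 (enum_rank a)) = u.
Proof. by apply/rowP => j; rewrite !mxE enum_valK. Qed.

Section Convex.
Variable S : (I -> R) -> Prop.
Hypothesis Sconv : forall t1 t2 l, S t1 -> S t2 -> 0 <= l <= 1 ->
  S (fun a => l * t1 a + (1 - l) * t2 a).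

Lemma sum0_seq (L : seq (R * (I -> R))) :
  (forall z, List.In z L -> 0 <= z.1) -> \sum_(z <- L) z.1 = 0 ->
  forall a, \sum_(z <- L) z.1 * z.2 a = 0.
Proof.
elim: L => [|z L IH] pos; first by move=> _ a; rewrite big_nil.
rewrite !big_cons => s0 a.
have z0 : 0 <= z.1 by apply: pos; left.
have L0 : 0 <= \sum_(z <- L) z.1.
  elim: L {IH s0} pos => [|z' L' IH'] pos'; first by rewrite big_nil.
  rewrite big_cons; apply: addr_ge0; first by apply: pos'; right; left.
  by apply: IH' => z'' [<-|i]; apply: pos'; [left | right; right].
have e1 : z.1 = 0 by lra.
have e2 : \sum_(z <- L) z.1 = 0 by lra.
by rewrite big_cons e1 mul0r add0r IH // => z' h; apply: pos; right.
Qed.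

Lemma sum_ge0_seq (L : seq (R * (I -> R))) :
  (forall z, List.In z L -> 0 <= z.1) -> 0 <= \sum_(z <- L) z.1.
Proof.
elim: L => [|z L IH] pos; first by rewrite big_nil.
rewrite big_cons; apply: addr_ge0; first by apply: pos; left.
by apply: IH => z' i; apply: pos; right.
Qed.

Lemma convex_seqW (L : seq (R * (I -> R))) :
  (forall z, List.In z L -> 0 <= z.1 /\ S z.2) -> 0 < \sum_(z <- L) z.1 ->
  S (fun a => \sum_(z <- L) z.1 / (\sum_(z <- L) z.1) * z.2 a).
Proof.
elim: L => [|z L IH] h; first by rewrite big_nil ltxx.
have [z0 Sz] := h z (or_introl erefl).
have hL : forall z', List.In z' L -> 0 <= z'.1 /\ S z'.2 by move=> z' i; apply: h; right.
have L0 : 0 <= \sum_(z <- L) z.1 by apply: sum_ge0_seq => z' i; have [] := hL z' i.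
rewrite big_cons => Wp.
set W := z.1 + _ in Wp *.
move: L0; rewrite le_eqVlt => /orP[/eqP L0|Lp].
  have e : (fun a => \sum_(z0 <- (z :: L)) z0.1 / W * z0.2 a) = z.2.
    apply: funext => a; rewrite big_cons.
    have -> : \sum_(z0 <- L) z0.1 / W * z0.2 a = W^-1 * \sum_(z0 <- L) z0.1 * z0.2 a.
      by rewrite mulr_sumr; apply: eq_bigr => z' _; rewrite mulrA [W^-1 * _]mulrC.
    rewrite sum0_seq //; last by move=> z' i; have [] := hL z' i.
    have z1p : 0 < z.1 by move: Wp; rewrite /W -L0 addr0.
    have -> : z.1 / W = 1 by rewrite /W -L0 addr0 divff // gt_eqF.
    by rewrite mul1r mulr0 addr0.
  by rewrite e.
set WL := \sum_(z <- L) z.1 in Lp Wp *.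
have SL := IH hL Lp.
have := Sconv Sz SL (l := z.1 / W).
have -> : (0 <= z.1 / W <= 1) = true.
  apply/andP; split; first by apply: divr_ge0 => //; exact: ltW.
  by rewrite ler_pdivrMr // mul1r /W lerDl ltW.
move=> /(_ isT).
have -> : (fun a => z.1 / W * z.2 a + (1 - z.1 / W) * (\sum_(z' <- L) z'.1 / WL * z'.2 a)) =
          (fun a => \sum_(z0 <- (z :: L)) z0.1 / W * z0.2 a).
  apply: funext => a; rewrite big_cons mulr_sumr.
  congr (_ + _); apply: eq_bigr => z' _ /=.
  have -> : 1 - z.1 / W = WL / W.
    by move: Wp; rewrite /W -/WL => Wp; field; rewrite gt_eqF.
  move: Wp; rewrite /W -/WL => Wp; field; apply/andP; split; rewrite gt_eqF //.
by [].
Qed.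

Lemma convex_seq (L : seq (R * (I -> R))) :
  (forall z, List.In z L -> 0 <= z.1 /\ S z.2) -> \sum_(z <- L) z.1 = 1 ->
  S (fun a => \sum_(z <- L) z.1 * z.2 a).
Proof.
move=> h s1; have := convex_seqW h; rewrite s1 ltr01 => /(_ isT).
have -> : (fun a => \sum_(z <- L) z.1 / 1 * z.2 a) = (fun a => \sum_(z <- L) z.1 * z.2 a).
  by apply: funext => a; apply: eq_bigr => z _; rewrite divr1.
by [].
Qed.
Lemma rowv_coord m (p q : 'I_m -> I -> R) (v : I -> R) :
  (rowv v <= famM p q)%MS ->
  exists D : 'I_m -> R, forall a, v a = \sum_i D i * (p i a - q i a).
Proof.
move=> /submxP [D e]; exists (fun i => D 0 i) => a.
have := congr1 (fun M : 'rV_#|I| => M 0 (enum_rank a)) e.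
by rewrite /= /rowv !mxE enum_rankK => ->; apply: eq_bigr => i _; rewrite !mxE enum_rankK.
Qed.

Lemma relint s0 : S s0 -> exists t0, S t0 /\ forall t, S t ->
  exists s l, S s /\ 0 < l < 1 /\ forall a, t0 a = l * t a + (1 - l) * s a.
Proof.
move=> Ss0.
have [m [p [q [fam [_ pmax]]]]] := affdim_spec Ss0.
pose N : R := (m.*2.+1)%:R.
have Np : 0 < N by rewrite /N ltr0n.
pose k := N^-1.
have kp : 0 < k by rewrite invr_gt0.
pose t0 := fun a => k * (s0 a + \sum_(i < m) (p i a + q i a)).
have combo : forall al : 'I_m -> R, (forall i, `|al i| <= k) ->
    S (fun a => t0 a - \sum_i al i * (p i a - q i a)).
  move=> al hal.
  pose L := (k, s0) :: [seq (k - al i, p i) | i <- index_enum 'I_m] ++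
                        [seq (k + al i, q i) | i <- index_enum 'I_m].
  have := @convex_seq L.
  have -> : (fun a => \sum_(z <- L) z.1 * z.2 a) = (fun a => t0 a - \sum_i al i * (p i a - q i a)).
    apply: funext => a; rewrite /L big_cons big_cat /t0.
    have e1 : \sum_(z <- [seq (k - al i, p i) | i <- index_enum 'I_m]) z.1 * z.2 a =
              \sum_(i < m) (k - al i) * p i a by rewrite big_map.
    have e2 : \sum_(z <- [seq (k + al i, q i) | i <- index_enum 'I_m]) z.1 * z.2 a =
              \sum_(i < m) (k + al i) * q i a by rewrite big_map.
    rewrite /= e1 e2 mulrDr mulr_sumr -addrA; congr (_ + _).
    rewrite -big_split /= -sumrN -big_split /=; apply: eq_bigr => i _; ring.
  apply.
    move=> z /= [<-|]; first by split => //; exact: ltW.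
    move=> /(List.in_app_or _ _ _) [] /(List.in_map_iff _ _ _) [i [<- _]] /=; split; try by case: (fam i).
      by have := ler_norm (al i); have := hal i; lra.
    by have := ler_norm (- al i); have := hal i; rewrite normrN; lra.
  have e1 : \sum_(z <- [seq (k - al i, p i) | i <- index_enum 'I_m]) z.1 =
            \sum_(i < m) (k - al i) by rewrite big_map.
  have e2 : \sum_(z <- [seq (k + al i, q i) | i <- index_enum 'I_m]) z.1 =
            \sum_(i < m) (k + al i) by rewrite big_map.
  rewrite /L big_cons big_cat /= e1 e2 -big_split /=.
  have -> : \sum_(i < m) ((k - al i) + (k + al i)) = \sum_(i < m) (k *+ 2).
    by apply: eq_bigr => i _; rewrite mulr2n; ring.
  rewrite sumr_const card_ord -mulrnA addrC -mulrSr -mulr_natr /k /N mul2n.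
  by rewrite mulVf // gt_eqF.
have St0 : S t0.
  have := combo (fun _ => 0); rewrite normr0 => /(_ (fun _ => ltW kp)).
  have -> : (fun a => t0 a - \sum_i 0 * (p i a - q i a)) = t0.
    by apply: funext => a; rewrite big1 ?subr0 // => i _; rewrite mul0r.
  by [].
exists t0; split => // t St.
have [D hD] := rowv_coord (rowspace fam pmax St St0).
pose M := 1 + \sum_i `|D i|.
have Mp : 0 < M by rewrite /M ltr_pwDl // sumr_ge0 // => i _.
pose dl := k / M.
have dlp : 0 < dl by rewrite divr_gt0.
have hal : forall i, `|dl * D i| <= k.
  move=> i; rewrite normrM (ger0_norm (ltW dlp)) /dl mulrAC ler_pdivrMr // ler_pM2l //.
  rewrite /M (bigD1 i) //=; have : 0 <= \sum_(j < m | j != i) `|D j| by apply: sumr_ge0 => j _.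
  lra.
have Ss := combo _ hal.
exists (fun a => t0 a - \sum_i (dl * D i) * (p i a - q i a)), (dl / (1 + dl)).
split; first exact: Ss.
split.
  apply/andP; split; first by rewrite divr_gt0 // addr_gt0.
  by rewrite ltr_pdivrMr ?addr_gt0 // mul1r ltrDr.
move=> a.
have -> : \sum_i dl * D i * (p i a - q i a) = dl * (t a - t0 a).
  by rewrite hD mulr_sumr; apply: eq_bigr => i _; rewrite mulrA.
have dl1 : 1 + dl != 0 by rewrite gt_eqF // addr_gt0.
by field.
Qed.
End Convex.
End Aff.

Section Main.
Variable R : realType.
Variables (V arc : finType) (tail head : arc -> V).
Variables (c : arc -> R) (A1 : {set arc}) (o d : V).

Local Notation tol := (tolled A1).
Local Notation X := (Xset tail head o d).
Local Notation fv := (@fval R V arc tail head c A1 o d).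
Local Notation epi := (@epi_negf R V arc tail head c A1 o d).
Local Notation feas := (@feasW R V arc tail head A1 o d).
Local Notation Wt_ := (@Wt R V arc tail head c A1 o d).
Local Notation WT_ := (@WT R V arc tail head c A1 o d).

Lemma tdotDl (t s w : tol -> R) al be :
  tdot (fun a => al * t a + be * s a) w = al * tdot t w + be * tdot s w.
Proof.
rewrite /tdot !mulr_sumr -big_split; apply: eq_bigr => a _ /=; ring.
Qed.

Lemma tdotDr (t w v : tol -> R) al be :
  tdot t (fun a => al * w a + be * v a) = al * tdot t w + be * tdot t v.
Proof.
rewrite /tdot !mulr_sumr -big_split; apply: eq_bigr => a _ /=; ring.
Qed.

Lemma tdotBr (t w v : tol -> R) th :
  tdot t (fun a => w a - th * v a) = tdot t w - th * tdot t v.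
Proof.
rewrite /tdot mulr_sumr -sumrB; apply: eq_bigr => a _ /=; ring.
Qed.

Lemma tdotN (t w : tol -> R) : tdot (fun a => - t a) w = - tdot t w.
Proof. by rewrite /tdot -sumrN; apply: eq_bigr => a _; rewrite mulNr. Qed.

Lemma costD (x y : arc -> R) al be :
  cost c (fun a => al * x a + be * y a) = al * cost c x + be * cost c y.
Proof.
rewrite /cost !mulr_sumr -big_split; apply: eq_bigr => a _ /=; ring.
Qed.

Lemma NxD (x y : arc -> R) al be v :
  Nx tail head (fun a => al * x a + be * y a) v =
  al * Nx tail head x v + be * Nx tail head y v.
Proof.
rewrite /Nx !big_split /= -!mulr_sumr; ring.
Qed.

Lemma Wt_eq t t' w w' : Wt_ t w -> Wt_ t w' -> Wt_ t' w -> Wt_ t' w' ->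
  tdot t w + tdot t' w' = tdot t w' + tdot t' w.
Proof.
move=> [x1 [f1 o1]] [x2 [f2 o2]] [x3 [f3 o3]] [x4 [f4 o4]].
have := o1 _ _ f2; have := o2 _ _ f1; have := o1 _ _ f3; have := o3 _ _ f1.
have := o2 _ _ f4; have := o4 _ _ f2; have := o3 _ _ f4; have := o4 _ _ f3.
lra.
Qed.

Lemma dot4 (t t' w w' : tol -> R) :
  \sum_a (t a - t' a) * (w a - w' a) = tdot t w - tdot t w' - (tdot t' w - tdot t' w').
Proof.
rewrite /tdot -!sumrB; apply: eq_bigr => a _; ring.
Qed.

Lemma fv_uniq t v1 v2 : fv t v1 -> fv t v2 -> v1 = v2.
Proof.
move=> [x1 X1 [e1 o1]] [x2 X2 [e2 o2]].
have := o1 _ X2; have := o2 _ X1; rewrite -e1 -e2 => h1 h2.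
by apply/eqP; rewrite eq_le h1 h2.
Qed.

Lemma tdot_mono (t w w' : tol -> R) : nonneg t -> (forall a, w a <= w' a) ->
  tdot t w <= tdot t w'.
Proof.
by move=> tn ww; apply: ler_sum => a _; apply: ler_wpM2l.
Qed.

Section Face.
Variable T : (tol -> R) -> Prop.
Variable F : (tol -> R) * R -> Prop.
Hypothesis Fsub : forall p, F p -> epi p.
Hypothesis Fconv : convex_set F.
Hypothesis Fext : forall p q l, epi p -> epi q -> 0 < l < 1 -> F (pcomb l p q) -> F p /\ F q.
Hypothesis nvert : ~ dir_contains_e F.
Hypothesis HTF : forall t, T t <-> exists z, F (t, z).

Lemma pcomb_same (t : tol -> R) l z1 z2 :
  pcomb l (t, z1) (t, z2) = (t, l * z1 + (1 - l) * z2).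
Proof.
rewrite /pcomb /=; congr (_, _); apply: funext => a /=; ring.
Qed.

Lemma Fgraph t z : F (t, z) -> fv t (- z).
Proof.
move=> Fp; have [tn [v [fvv le]]] := Fsub Fp.
suff -> : z = - v by rewrite opprK.
move: le; rewrite /= le_eqVlt => /orP[/eqP -> //|lt].
exfalso; apply: nvert.
pose e := z + v.
have ep : 0 < e by rewrite /e; lra.
have E1 : epi (t, - v) by split => //; exists v; split.
have E2 : epi (t, z + e) by split => //; exists v; split => //=; lra.
have h12 : 0 < (1 / 2 : R) < 1 by apply/andP; split; lra.
have := @Fext _ _ (1/2) E1 E2 h12.
rewrite pcomb_same.
have -> : 1 / 2 * - v + (1 - 1 / 2) * (z + e) = z by rewrite /e; field.
move=> /(_ Fp) [F1 F2].
exists 1%N, (fun _ => (2 * e)^-1), (fun _ => (t, z + e)), (fun _ => (t, - v)).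
split; first by [].
split; first by move=> a; rewrite big_ord1 /= subrr mulr0.
rewrite big_ord1 /=.
have -> : z + e - - v = 2 * e by rewrite /e; ring.
by rewrite mulVf // gt_eqF // mulr_gt0.
Qed.

Lemma Tnn t : T t -> nonneg t.
Proof. by move=> /HTF [z Fz]; have [] := Fsub Fz. Qed.

Lemma fT t : T t -> exists v, fv t v /\ F (t, - v).
Proof.
move=> /HTF [z Fz]; exists (- z); split; first exact: Fgraph.
by rewrite opprK.
Qed.

Lemma Tconv t1 t2 l : T t1 -> T t2 -> 0 <= l <= 1 ->
  T (fun a => l * t1 a + (1 - l) * t2 a).
Proof.
move=> /HTF [z1 F1] /HTF [z2 F2] l01; apply/HTF.
exists (l * z1 + (1 - l) * z2); exact: (Fconv F1 F2 l01).
Qed.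

Lemma f_affine t1 t2 v1 v2 l : F (t1, - v1) -> F (t2, - v2) -> 0 <= l <= 1 ->
  fv (fun a => l * t1 a + (1 - l) * t2 a) (l * v1 + (1 - l) * v2).
Proof.
move=> F1 F2 l01; have := Fgraph (Fconv F1 F2 l01).
by rewrite /pcomb /=; congr fv; ring.
Qed.


Section Relint.
Variable t0 : tol -> R.
Hypothesis Tt0 : T t0.
Hypothesis rel : forall t, T t -> exists s l, T s /\ 0 < l < 1 /\
  forall a, t0 a = l * t a + (1 - l) * s a.
Variable v0 : R.
Hypothesis fv0 : fv t0 v0.
Hypothesis Fv0 : F (t0, - v0).
Variable x0 : arc -> R.
Hypothesis X0 : X x0.
Hypothesis ev0 : v0 = cost c x0 + tdot t0 (restr x0).

Lemma opt_T x : X x -> cost c x + tdot t0 (restr x) = v0 ->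
  forall t, T t -> forall w' x', feas w' x' ->
  cost c x + tdot t (restr x) <= cost c x' + tdot t w'.
Proof.
move=> Xx ex t Tt w' x' [X' [nw' le']].
have [s [l [Ts [/andP [l0 l1] eq]]]] := rel Tt.
have [vt [fvt Ft]] := fT Tt; have [vs [fvs Fs]] := fT Ts.
have l01 : 0 <= l <= 1 by rewrite !ltW.
have := f_affine Ft Fs l01.
have -> : (fun a => l * t a + (1 - l) * s a) = t0 by apply: funext => a; rewrite eq.
move=> fv0'; have ev := fv_uniq fv0 fv0'.
have [xt Xt [et ot]] := fvt; have [xs Xs [es os]] := fvs.
have ht := ot _ Xx; have hs := os _ Xx.
have e0 : tdot t0 (restr x) = l * tdot t (restr x) + (1 - l) * tdot s (restr x).
  rewrite -tdotDl; congr tdot; apply: funext => a; exact: eq.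
set A := cost c x + tdot t (restr x) in ht *.
set B := cost c x + tdot s (restr x) in hs.
have hsum : l * (A - vt) + (1 - l) * (B - vs) = 0.
  rewrite /A /B; move: ex; rewrite e0 ev => ex; lra.
have p1 : 0 <= l * (A - vt) by apply: mulr_ge0; lra.
have p2 : 0 <= (1 - l) * (B - vs) by apply: mulr_ge0; lra.
have : l * (A - vt) = 0 by lra.
move/eqP; rewrite mulf_eq0 gt_eqF //= subr_eq0 => /eqP ->.
apply: (le_trans (ot _ X')).
by rewrite lerD2l; apply: tdot_mono => //; apply: Tnn.
Qed.

Lemma zero_T a : t0 a = 0 -> forall t, T t -> t a = 0.
Proof.
move=> z0 t Tt; have [s [l [Ts [/andP [l0 l1] eq]]]] := rel Tt.
have := eq a; rewrite z0 => e.
have ta := Tnn Tt a; have sa := Tnn Ts a.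
have p1 : 0 <= l * t a by apply: mulr_ge0 => //; exact: ltW.
have p2 : 0 <= (1 - l) * s a by apply: mulr_ge0 => //; lra.
have : l * t a = 0 by lra.
by move/eqP; rewrite mulf_eq0 gt_eqF //= => /eqP.
Qed.

Lemma WT_opt x : X x -> cost c x + tdot t0 (restr x) = v0 -> WT_ T (restr x).
Proof.
move=> Xx ex t Tt; exists x; split.
  split => //; split => //; by move=> a; have [_ h] := Xx; apply: h.
exact: opt_T.
Qed.

Lemma tdot_ind (t w : tol -> R) a :
  tdot t (fun b => w b + (b == a)%:R) = tdot t w + t a.
Proof.
rewrite /tdot.
have -> : \sum_b t b * (w b + (b == a)%:R) = \sum_b t b * w b + \sum_b t b * (b == a)%:R.
  by rewrite -big_split; apply: eq_bigr => b _; rewrite mulrDr.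
congr (_ + _); rewrite (bigD1 a) //= eqxx mulr1 big1 ?addr0 // => b /negbTE ->.
by rewrite mulr0.
Qed.

Section U.
Variable u : tol -> R.
Hypothesis Hu : forall w w' : tol -> R, WT_ T w -> WT_ T w' -> tdot u w = tdot u w'.

Lemma u_zero a : t0 a = 0 -> u a = 0.
Proof.
move=> z0.
have W1 : WT_ T (fun b => restr x0 b + (b == a)%:R).
  move=> t Tt; exists x0; split.
    split => //; split.
      by move=> b; apply: addr_ge0 => //; have [_ h] := X0; apply: h.
    by move=> b; rewrite /restr lerDl ler0n.
  move=> w' x' f'; rewrite tdot_ind (zero_T z0 Tt) addr0.
  by apply: opt_T => //; rewrite ev0.
have W0 : WT_ T (restr x0) by apply: WT_opt => //; rewrite ev0.
have := Hu W1 W0; rewrite tdot_ind => h; lra.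
Qed.
Lemma bound : exists K, 0 <= K /\ forall x, X x ->
  0 <= (tdot u (restr x) - tdot u (restr x0)) + K * (cost c x + tdot t0 (restr x) - v0).
Proof.
pose lin := fun y : option arc -> R => forall v,
  Nx tail head (fun a => y (Some a)) v = y None * bvec R o d v.
pose G := fun y : option arc -> R => cost c (fun a => y (Some a)) +
  tdot t0 (restr (fun a => y (Some a))) - y None * v0.
pose H := fun y : option arc -> R => tdot u (restr (fun a => y (Some a))) -
  y None * tdot u (restr x0).
have comb : forall (y z : option arc -> R) th,
    (fun a => y (Some a) - th * z (Some a)) = (fun a => 1 * y (Some a) + (- th) * z (Some a)).
  by move=> y z th; apply: funext => a; ring.
have linB : forall y z th, lin y -> lin z -> lin (fun i => y i - th * z i).
  move=> y z th ly lz v; rewrite /= comb NxD ly lz; ring.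
have GB : forall y z th, G (fun i => y i - th * z i) = G y - th * G z.
  move=> y z th; rewrite /G /= comb costD.
  have -> : restr (fun a => 1 * y (Some a) + - th * z (Some a)) =
    (fun a => 1 * restr (fun a => y (Some a)) a + - th * restr (fun a => z (Some a)) a) by [].
  rewrite tdotDr; ring.
have HB : forall y z th, H (fun i => y i - th * z i) = H y - th * H z.
  move=> y z th; rewrite /H /=.
  have -> : restr (fun a => y (Some a) - th * z (Some a)) =
    (fun a => restr (fun a => y (Some a)) a - th * restr (fun a => z (Some a)) a) by [].
  rewrite tdotBr; ring.
pose xx := fun (y : option arc -> R) a => (y None + 1)^-1 * y (Some a) + (y None + 1)^-1 * x0 a.
have Xxx : forall y, @cone _ _ lin y -> X (xx y).
  move=> y [ly ny]; have b0 := ny None.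
  split.
    move=> v; rewrite /xx NxD ly; have [h _] := X0; rewrite h; field.
    by rewrite gt_eqF // ltr_pwDr.
  move=> a; rewrite /xx; apply: addr_ge0; apply: mulr_ge0; rewrite ?invr_ge0 ?ny //.
  - by apply: addr_ge0.
  - by apply: addr_ge0.
  - by have [_ h] := X0; apply: h.
have val : forall y, @cone _ _ lin y ->
    cost c (xx y) + tdot t0 (restr (xx y)) = (y None + 1)^-1 * (G y + (y None + 1) * v0).
  move=> y [ly ny]; have b0 := ny None.
  rewrite /xx costD.
  have -> : restr (fun a => (y None + 1)^-1 * y (Some a) + (y None + 1)^-1 * x0 a) =
    (fun a => (y None + 1)^-1 * restr (fun a => y (Some a)) a + (y None + 1)^-1 * restr x0 a) by [].
  rewrite tdotDr /G ev0; ring.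
have Gpos : forall y, @cone _ _ lin y -> 0 <= G y.
  move=> y cy; have b0 := cy.2 None.
  have [xm Xm [em om]] := fv0.
  have := om _ (Xxx y cy); rewrite val //.
  have bp : 0 < y None + 1 by rewrite ltr_pwDr.
  move=> h; have := ler_wpM2l (ltW bp) h.
  rewrite mulrA mulfV ?gt_eqF // mul1r; lra.
have GH : forall y, @cone _ _ lin y -> G y = 0 -> H y = 0.
  move=> y cy G0; have b0 := cy.2 None.
  have nz : y None + 1 != 0 by rewrite gt_eqF // ltr_pwDr.
  have opt : cost c (xx y) + tdot t0 (restr (xx y)) = v0.
    by rewrite val // G0 add0r mulrA mulVf ?mul1r.
  have := Hu (WT_opt (Xxx y cy) opt) (WT_opt X0 (esym ev0)).
  rewrite /xx /H.
  have -> : restr (fun a => (y None + 1)^-1 * y (Some a) + (y None + 1)^-1 * x0 a) =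
    (fun a => (y None + 1)^-1 * restr (fun a => y (Some a)) a + (y None + 1)^-1 * restr x0 a) by [].
  rewrite tdotDr => e.
  have e2 : tdot u (restr (fun a => y (Some a))) = y None * tdot u (restr x0).
    have := congr1 (fun r => (y None + 1) * r) e.
    rewrite mulrDr !mulrA mulfV // !mul1r => e3.
    have : tdot u (restr (fun a => y (Some a))) = (y None + 1) * tdot u (restr x0) - tdot u (restr x0) by lra.
    by move=> ->; ring.
  by rewrite e2 subrr.
have [K [K0 HK]] := @cone_bound _ _ lin linB G H GB HB Gpos GH.
exists K; split => // x Xx.
pose y := fun i : option arc => if i is Some a then x a else 1.
have cy : @cone _ _ lin y.
  split; last by case => //= a; have [_ h] := Xx; apply: h.
  by move=> v; rewrite /= mul1r; have [h _] := Xx; apply: h.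
by have := HK y cy; rewrite /H /G /= !mul1r.
Qed.

Lemma epi_shift K dl : 0 <= K -> (forall x, X x ->
  0 <= (tdot u (restr x) - tdot u (restr x0)) + K * (cost c x + tdot t0 (restr x) - v0)) ->
  0 < dl -> dl * K <= 1 -> (forall a, dl * `|u a| <= t0 a) ->
  epi (fun a => t0 a + dl * u a, - (v0 + dl * tdot u (restr x0))).
Proof.
move=> K0 HK dp dK du; split.
  move=> a /=; have := du a; have : dl * - u a <= dl * `|u a|.
    by apply: ler_wpM2l; [exact: ltW | rewrite -normrN; exact: ler_norm].
  rewrite mulrN; lra.
exists (v0 + dl * tdot u (restr x0)); split; last by [].
have e1 : forall w, tdot (fun a => t0 a + dl * u a) w = tdot t0 w + dl * tdot u w.
  move=> w; rewrite -[tdot t0 w]mul1r -tdotDl; congr tdot; apply: funext => a; ring.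
exists x0 => //; split; first by rewrite e1 ev0 addrA.
move=> y Xy; rewrite e1.
have [xm Xm [em om]] := fv0.
have g0 := om _ Xy.
have hb := HK _ Xy.
have p1 := mulr_ge0 (ltW dp) hb.
have p2 : 0 <= (cost c y + tdot t0 (restr y) - v0) * (1 - dl * K).
  by apply: mulr_ge0; lra.
rewrite -subr_ge0.
have -> : cost c y + (tdot t0 (restr y) + dl * tdot u (restr y)) - (v0 + dl * tdot u (restr x0)) =
  dl * (tdot u (restr y) - tdot u (restr x0) + K * (cost c y + tdot t0 (restr y) - v0)) +
  (cost c y + tdot t0 (restr y) - v0) * (1 - dl * K) by ring.
by apply: addr_ge0.
Qed.
End U.

Lemma h12 : 0 < (1 / 2 : R) < 1.
Proof. by apply/andP; split; lra. Qed.

Lemma shift_T u : (forall w w' : tol -> R, WT_ T w -> WT_ T w' -> tdot u w = tdot u w') ->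
  exists dl, 0 < dl /\ T (fun a => t0 a + dl * u a) /\ T (fun a => t0 a + dl * - u a).
Proof.
move=> Hu.
have Hu' : forall w w' : tol -> R, WT_ T w -> WT_ T w' -> tdot (fun a => - u a) w = tdot (fun a => - u a) w'.
  by move=> w w' W1 W2; rewrite !tdotN (Hu _ _ W1 W2).
have [K1 [K10 HK1]] := bound Hu.
have [K2 [K20 HK2]] := bound Hu'.
pose M := \sum_a `|u a| / t0 a.
have tn := Tnn Tt0.
have M0 : 0 <= M by apply: sumr_ge0 => a _; apply: divr_ge0.
pose D := 1 + K1 + K2 + M.
have Dp : 0 < D by rewrite /D; lra.
pose dl := D^-1.
have dp : 0 < dl by rewrite invr_gt0.
have dK : forall K, 0 <= K -> K <= D -> dl * K <= 1.
  by move=> K _ KD; rewrite mulrC ler_pdivrMr // mul1r.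
have du : forall a, dl * `|u a| <= t0 a.
  move=> a; case: (eqVneq (t0 a) 0) => [z|nz].
    by rewrite (u_zero Hu z) normr0 mulr0 z.
  have tp : 0 < t0 a by rewrite lt_def nz tn.
  have hM : `|u a| / t0 a <= M.
    rewrite /M (bigD1 a) //=; have : 0 <= \sum_(b | b != a) `|u b| / t0 b.
      by apply: sumr_ge0 => b _; apply: divr_ge0.
    lra.
  move: hM; rewrite ler_pdivrMr // => hM.
  rewrite mulrC ler_pdivrMr //; apply: le_trans hM _.
  rewrite mulrC ler_pM2l // /D; lra.
have du' : forall a, dl * `|(fun a => - u a) a| <= t0 a by move=> a; rewrite normrN.
have DK1 : dl * K1 <= 1 by apply: dK => //; rewrite /D; lra.
have DK2 : dl * K2 <= 1 by apply: dK => //; rewrite /D; lra.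
clearbody dl.
have E1 := epi_shift K10 HK1 dp DK1 du.
have E2 := epi_shift K20 HK2 dp DK2 du'.
have := Fext E1 E2 h12.
have -> : pcomb (1 / 2) (fun a => t0 a + dl * u a, - (v0 + dl * tdot u (restr x0)))
    (fun a => t0 a + dl * - u a, - (v0 + dl * tdot (fun a => - u a) (restr x0))) = (t0, - v0).
  rewrite /pcomb /=; congr (_, _); first by apply: funext => a /=; field.
  by rewrite tdotN; field.
move=> /(_ Fv0) [F1 F2].
exists dl; split => //; split; apply/HTF; [exists (- (v0 + dl * tdot u (restr x0))) |
  exists (- (v0 + dl * tdot (fun a => - u a) (restr x0)))] => //.
Qed.

Lemma final_rel : affdim T + affdim (WT_ T) = (#|{: tol}|)%:Z.
Proof.
have W0 : WT_ T (restr x0) by apply: WT_opt => //; rewrite ev0.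
have [mT [pT [qT [famT [eT maxT]]]]] := affdim_spec Tt0.
have [mW [pW [qW [famW [eW maxW]]]]] := affdim_spec W0.
rewrite eT eW -PoszD; congr Posz.
set MT := famM pT qT; set MW := famM pW qW.
have orth : MT *m MW^T = 0.
  apply/matrixP => i k; rewrite !mxE.
  under eq_bigr do rewrite !mxE.
  rewrite (sum_enumv (fun a => (pT i a - qT i a) * (pW k a - qW k a))) dot4.
  have [T1 T2] := famT i; have [W1 W2] := famW k.
  have := Wt_eq (W1 _ T1) (W2 _ T1) (W1 _ T2) (W2 _ T2); lra.
have le1 := mulmx0_rank_max orth; rewrite mxrank_tr in le1.
have KMT : (kermx MW^T <= MT)%MS.
  apply/row_subP => i.
  pose u := fun a => kermx MW^T i (enum_rank a).
  have Hu : forall w w' : tol -> R, WT_ T w -> WT_ T w' -> tdot u w = tdot u w'.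
    move=> w w' W1 W2; have [D hD] := rowv_coord (rowspace famW maxW W1 W2).
    apply/eqP; rewrite -subr_eq0 /tdot -sumrB.
    have -> : \sum_a (u a * w a - u a * w' a) = \sum_a u a * (w a - w' a).
      by apply: eq_bigr => a _; rewrite mulrBr.
    under eq_bigr do rewrite hD mulr_sumr.
    rewrite exchange_big /= big1 // => k _.
    have e0 : (kermx MW^T *m MW^T) i k = 0 by rewrite mulmx_ker mxE.
    have e1 : (kermx MW^T *m MW^T) i k = \sum_a u a * (pW k a - qW k a).
      rewrite mxE -(sum_enumv (fun a => u a * (pW k a - qW k a))).
      by apply: eq_bigr => j _; rewrite /u enum_valK; congr (_ * _); rewrite /MW /famM !mxE.
    rewrite e1 in e0.
    have -> : \sum_a u a * (D k * (pW k a - qW k a)) = D k * \sum_a u a * (pW k a - qW k a).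
      by rewrite mulr_sumr; apply: eq_bigr => a _; ring.
    by rewrite e0 mulr0.
  have [dl [dp [T1 T2]]] := shift_T Hu.
  have := rowspace famT maxT T1 T2.
  have -> : rowv (fun a => t0 a + dl * u a - (t0 a + dl * - u a)) = (2 * dl) *: row i (kermx MW^T).
    apply/rowP => j; rewrite [RHS]mxE [(row _ _) _ _]mxE /rowv mxE /u enum_valK; ring.
  move=> h; have := scalemx_sub (2 * dl)^-1 h.
  by rewrite scalerA mulVf ?scale1r // mulf_neq0 // gt_eqF.
have le2 := mxrankS KMT; rewrite mxrank_ker mxrank_tr in le2.
apply/eqP; rewrite eqn_leq le1 /=.
by move: le2; rewrite leq_subLR addnC.
Qed.
End Relint.

Lemma final_face : (exists p, F p) -> affdim T + affdim (WT_ T) = (#|{: tol}|)%:Z.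
Proof.
move=> [[ts zs] Fs]; have Tts : T ts by apply/HTF; exists zs.
have [t0 [Tt0 rel]] := relint Tconv Tts.
have [v0 [fv0 Fv0]] := fT Tt0.
have [x0 X0 [ev0 _]] := fv0.
exact: (final_rel Tt0 rel fv0 Fv0 X0 ev0).
Qed.
End Face.
End Main.

Unset Implicit Arguments.

Theorem theorem2 (R : realType) (V arc : finType) (tail head : arc -> V)
    (c : arc -> R) (A1 : {set arc}) (o d : V)
    (Hsimple : injective (fun a => (tail a, head a)))
    (Hc : forall a, 0 <= c a)
    (HA1 : A1 != set0) (HA1p : A1 != setT)
    (Hod : o != d)
    (Hpath : exists s, tollfree_walk tail head A1 o d s)
    (T : (tolled A1 -> R) -> Prop)
    (HT : action_set tail head c o d T) :
  affdim T + affdim (WT tail head c o d T) = #|A1|%:Z.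
Proof.
case: HT => F [[Fsub [Fconv Fext]] [Fne [nvert HTF]]].
have -> : #|A1| = #|{: tolled A1}|.
  by rewrite card_sig; apply: eq_card.
exact: (final_face Fsub Fconv Fext nvert HTF Fne).
Qed.
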